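(* Let $s\in\mathbb N$, $N\ge1$, and let $A_s,B_s>0$ be constants such that for all $N'\ge1$ and $r'\ge2$, if $\boldsymbol k_1,\dots,\boldsymbol k_{r'}$ are i.i.d. uniform on $Q_{N'}$ then $\Pr(\oplus_{i=1}^{r'}\boldsymbol k_i\in Q_{N'})\le A_s^{r'}N'^{r'/4}r'^{-B_s\sqrt{N'}}$. Let $I=\{V\subseteq Q_N:\mathrm{rank}(V)<|V|\}$, $I^*=\{V\in I:\text{every proper subset }W\subsetneq V\text{ has full rank}\}$, and $I^*_r=\{V\in I^*:|V|=r\}$. Then for all $r\ge2$, $$|I^*_{r+1}|\le\frac{|Q_N|^r}{(r+1)!}A_s^rN^{r/4}r^{-B_s\sqrt N}.$$
   Context: For $k\in\mathbb N_0$, $k=\sum_{\ell\ge1}a_\ell2^{\ell-1}$, $\kappa=\{\ell:a_\ell=1\}$; for $\boldsymbol k\in\mathbb N_0^s$ with digit sets $\kappa_j$, $\|\boldsymbol\kappa\|_1=\sum_j\sum_{\ell\in\kappa_j}\ell$; $Q_N=\{\boldsymbol k\in\mathbb N_0^s\setminus\{\boldsymbol0\}:\|\boldsymbol\kappa\|_1\le N\}$. $\oplus$ is componentwise bitwise XOR on $\mathbb N_0^s$, making it an $\mathbb F_2$-vector space; the rank of a finite subset $V$ is the size of its largest linearly independent subset, and $V$ has full rank if $\mathrm{rank}(V)=|V|$. *)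

(* Defs.v *)
From Stdlib Require Import Reals.
From mathcomp Require Import all_boot.
Local Open Scope nat_scope.
Set Implicit Arguments. Unset Strict Implicit. Unset Printing Implicit Defensive.

(* Vectors k in N_0^s with every coordinate < 2^N.  Every k with
   ||kappa||_1 <= N has all coordinates < 2^N, so Q_N lives inside this type. *)
Definition vecT (N s : nat) := {ffun 'I_s -> 'I_(2 ^ N)}.

(* digit a_l of k (l >= 1): k = sum_l a_l 2^(l-1) *)
Definition digit (k l : nat) : nat := odd (k %/ 2 ^ l.-1).

(* sum of l over kappa = {l : a_l = 1}; digits with l > k vanish since 2^(l-1) >= l *)
Definition wt (k : nat) : nat := \sum_(1 <= l < k.+1) digit k l * l.

Definition normk (s : nat) (v : 'I_s -> nat) : nat := \sum_(j < s) wt (v j).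

Definition inQ (N s : nat) (v : 'I_s -> nat) : bool :=
  [exists j, v j != 0] && (normk v <= N).

Definition QN (N s : nat) : {set vecT N s} :=
  [set x : vecT N s | inQ N (fun j => (x j : nat))].

Definition xorv (N s : nat) (W : seq (vecT N s)) : 'I_s -> nat :=
  fun j => foldr (fun (x : vecT N s) acc => Nat.lxor (x j : nat) acc) 0 W.

(* linear independence over F_2: no nonempty subset has XOR-sum 0 *)
Definition indep (N s : nat) (W : {set vecT N s}) : bool :=
  [forall U : {set vecT N s},
     ((U \subset W) && (U != set0)) ==> [exists j, xorv (enum U) j != 0]].

Definition rank (N s : nat) (V : {set vecT N s}) : nat :=
  \max_(W : {set vecT N s} | (W \subset V) && indep W) #|W|.

Definition Iset (N s : nat) : {set {set vecT N s}} :=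
  [set V : {set vecT N s} | (V \subset QN N s) && (rank V < #|V|)].

Definition Istar (N s : nat) : {set {set vecT N s}} :=
  [set V : {set vecT N s} in Iset N s | [forall W : {set vecT N s}, (W \proper V) ==> (rank W == #|W|)]].

Definition Istar_r (N s r : nat) : {set {set vecT N s}} :=
  [set V : {set vecT N s} in Istar N s | #|V| == r].

Definition good_tuples (N s r : nat) : nat :=
  #|[set f : {ffun 'I_r -> vecT N s} |
       [forall i, f i \in QN N s] && inQ N (xorv [seq f i | i <- enum 'I_r])]|.

(* Pr(k_1 (+) ... (+) k_r in Q_N) for k_i i.i.d. uniform on Q_N *)
Definition probXorQ (N s r : nat) : R :=
  Rdiv (INR (good_tuples N s r)) (INR (#|QN N s| ^ r)%nat).

(* Main.v *)
Require Import Defs.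
From Stdlib Require Import Reals PeanoNat Lra.
From HB Require Import structures.
From mathcomp Require Import all_boot.

Lemma lxorA' : associative Nat.lxor.
Proof. by move=> a b c; rewrite Nat.lxor_assoc. Qed.
HB.instance Definition _ := Monoid.isComLaw.Build nat 0 Nat.lxor lxorA' Nat.lxor_comm Nat.lxor_0_l.

Section S.
Variables N s : nat.
Local Notation vT := (vecT N s).

Lemma xorvE (W : seq vT) j : xorv W j = \big[Nat.lxor/0]_(x <- W) (x j : nat).
Proof. by elim: W => [|x W IH]; rewrite ?big_nil ?big_cons //= -IH. Qed.

Lemma indep_rank (W : {set vT}) : indep W -> #|W| <= rank W.
Proof. by move=> iW; rewrite /rank; apply: (@leq_bigmax_cond _ (fun W0 : {set vT} => (W0 \subset W) && indep W0) (fun W0 => #|W0|)); rewrite /= subxx iW. Qed.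

Lemma rank_full (U : {set vT}) : rank U = #|U| -> indep U.
Proof.
move=> rU.
pose P := [pred W : {set vT} | (W \subset U) && indep W].
have hpos : 0 < #|P|.
  apply/card_gt0P; exists set0; rewrite !inE sub0set /=.
  apply/forallP => U'; apply/implyP => /andP [].
  by rewrite subset0 => /eqP ->; rewrite eqxx.
case: (@eq_bigmax_cond _ P (fun W => #|W|) hpos) => W0.
move=> HW eqm; move: HW; rewrite unfold_in /= => /andP [sWU iW].
have eqm' : rank U = #|W0| by rewrite -eqm.
have : W0 == U.
  rewrite eqEcard sWU /=. rewrite -rU eqm'. by [].
by move/eqP <-.
Qed.

Lemma istar_xor (V : {set vT}) : V \in Istar N s -> forall j, xorv (enum V) j = 0.
Proof.
rewrite inE => /andP [] ; rewrite inE => /andP [_ rV] /forallP min.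
have niV : ~~ indep V.
  by apply/negP => iV; move: (@indep_rank V iV); rewrite leqNgt rV.
move: niV => /forallPn [U]; rewrite negb_imply => /andP [/andP [sUV nU0]] /existsPn H.
have eUV : U = V.
  apply/eqP; apply/negPn/negP => nUV.
  have pUV : U \proper V by rewrite properEneq nUV sUV.
  move: (min U); rewrite pUV /= => /eqP /rank_full iU.
  move/forallP: iU => /(_ U); rewrite subxx nU0 /= => /existsP [j].
  by rewrite (negbTE (H j)).
by move=> j; rewrite -eUV; apply/eqP; rewrite -[_ == 0]negbK H.
Qed.

End S.
Section S2.
Variables N s r : nat.
Local Notation vT := (vecT N s).

Definition Tset := [set f : {ffun 'I_r.+1 -> vT} |
   injectiveb f && (f @: [set: 'I_r.+1] \in Istar_r N s r.+1)].

Lemma card_T : #|Tset| = #|Istar_r N s r.+1| * r.+1`!.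
Proof.
rewrite -sum1_card (partition_big (fun f : {ffun 'I_r.+1 -> vT} => f @: [set: 'I_r.+1]) (mem (Istar_r N s r.+1))); last first.
  by move=> f; rewrite inE => /andP [].
rewrite -sum_nat_const; apply: eq_bigr => V HV.
have cV : #|V| = r.+1.
  move: HV; rewrite !inE; case/andP => _ H; exact/eqP.
rewrite sum1dep_card -ffactnn.
have -> : r.+1 ^_ r.+1 = #|V| ^_ #|'I_r.+1| by rewrite cV card_ord.
rewrite -card_inj_ffuns_on; apply: eq_card => f.
rewrite !inE; apply/andP/andP.
  move=> [/andP [injf _] /eqP <-]; split => //.
  by apply/ffun_onP => x; apply: imset_f.
move=> [/ffun_onP fV injf].
have eV : f @: [set: 'I_r.+1] = V.
  apply/eqP; rewrite eqEcard; apply/andP; split.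
    by apply/subsetP => y /imsetP [x _ ->].
  by rewrite card_imset ?cV ?cardsT ?card_ord //; apply/injectiveP.
rewrite eV injf; split => //; by move: HV; rewrite !inE.
Qed.
End S2.
Section S3.
Variables N s r : nat.
Local Notation vT := (vecT N s).

Definition trunc (f : {ffun 'I_r.+1 -> vT}) : {ffun 'I_r -> vT} :=
  [ffun i => f (widen_ord (leqnSn r) i)].

Lemma big_enum_ord n (g : 'I_n -> nat) :
  \big[Nat.lxor/0]_(i <- enum 'I_n) g i = \big[Nat.lxor/0]_(i < n) g i.
Proof. by rewrite big_enum; apply: eq_bigl. Qed.

Lemma xor_T f : f \in Tset N s r ->
  forall j, xorv [seq trunc f i | i <- enum 'I_r] j = f ord_max j.
Proof.
rewrite inE => /andP [/injectiveP injf HV] j.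
have HV' : f @: [set: 'I_r.+1] \in Istar N s by move: HV; rewrite inE => /andP [].
have := @istar_xor N s _ HV' j.
rewrite !xorvE.
have pe : perm_eq (enum (f @: [set: 'I_r.+1])) [seq f i | i <- enum 'I_r.+1].
  apply: uniq_perm; first exact: enum_uniq.
    by rewrite map_inj_uniq ?enum_uniq.
  move=> y; rewrite mem_enum; apply/imsetP/mapP => [[x _ ->]|[x _ ->]].
    by exists x; rewrite ?mem_enum.
  by exists x; rewrite ?inE.
rewrite (perm_big _ pe) !big_map -!enumT !big_enum_ord big_ord_recr /=.
move=> H; rewrite -(Nat.lxor_eq _ _ H).
by apply: eq_bigr => i _; rewrite ffunE.
Qed.

Lemma inQ_ext (v w : 'I_s -> nat) : (forall j, v j = w j) -> inQ N v = inQ N w.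
Proof.
move=> e; rewrite /inQ /normk; congr andb.
  by apply: eq_existsb => j; rewrite e.
by congr leq; apply: eq_bigr => j _; rewrite e.
Qed.

Lemma trunc_inj : {in Tset N s r &, injective trunc}.
Proof.
move=> f g Hf Hg e; apply/ffunP => i.
case: (unliftP ord_max i) => [k ->|->].
  have -> : lift ord_max k = widen_ord (leqnSn r) k by apply: val_inj; rewrite /= /bump leqNgt ltn_ord.
  by have := congr1 (fun h : {ffun 'I_r -> vT} => h k) e; rewrite !ffunE.
apply/ffunP => j; apply: ord_inj.
by rewrite -(xor_T _ Hf) -(xor_T _ Hg) e.
Qed.

Lemma card_good : #|Istar_r N s r.+1| * r.+1`! <= good_tuples N s r.
Proof.
rewrite -card_T -(card_in_imset trunc_inj) /good_tuples.
apply: subset_leq_card; apply/subsetP => g /imsetP [f Hf ->].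
have Hf' := Hf; rewrite inE in Hf'; case/andP: Hf' => _ HV.
have sQ : f @: [set: 'I_r.+1] \subset QN N s.
  by move: HV; rewrite !inE => /andP [/andP [/andP [] ]].
have fQ : forall x, f x \in QN N s.
  by move=> x; apply: (subsetP sQ); apply: imset_f.
rewrite inE; apply/andP; split.
  by apply/forallP => i; rewrite ffunE.
rewrite (inQ_ext _ (fun j => f ord_max j) (xor_T _ Hf)).
by have := fQ ord_max; rewrite inE.
Qed.

Lemma good_le : good_tuples N s r <= #|QN N s| ^ r.
Proof.
rewrite /good_tuples.
have Hc : #|[set f : {ffun 'I_r -> vT} in ffun_on (QN N s)]| = #|QN N s| ^ r.
  by rewrite cardsE card_ffun_on card_ord.
rewrite -Hc.
apply: subset_leq_card; apply/subsetP => g; rewrite inE => /andP [/forallP H _].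
by rewrite inE; apply/ffun_onP.
Qed.
End S3.

Local Open Scope R_scope.

Theorem lemma6 (s N : nat) (A B : R) :
  (0 < s)%N -> (1 <= N)%N -> 0 < A -> 0 < B ->
  (forall N' r' : nat, (1 <= N')%N -> (2 <= r')%N ->
     probXorQ N' s r' <=
       pow A r' * Rpower (INR N') (INR r' / 4) * Rpower (INR r') (- (B * sqrt (INR N')))) ->
  forall r : nat, (2 <= r)%N ->
    INR #|Istar_r N s r.+1| <=
      INR (#|QN N s| ^ r)%N / INR (r.+1)`! * pow A r * Rpower (INR N) (INR r / 4)
        * Rpower (INR r) (- (B * sqrt (INR N))).
Proof.
move=> _ hN _ _ hyp r hr.
have hp := hyp N r hN hr.
set b := pow A r * Rpower (INR N) (INR r / 4) * Rpower (INR r) (- (B * sqrt (INR N)))  in hp *.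
have c1 := card_good N s r.
have c2 := good_le N s r.
have hG : INR (good_tuples N s r) <= INR (#|QN N s| ^ r)%N * b.
  case: (boolP (#|QN N s| ^ r == 0)%N) => [/eqP q0|qn0].
    have : good_tuples N s r = 0%N by apply/eqP; rewrite -leqn0 -q0.
    by move=> ->; rewrite q0 /= Rmult_0_l; apply: Rle_refl.
  have qpos : 0 < INR (#|QN N s| ^ r)%N.
    by apply: lt_0_INR; apply/ltP; rewrite lt0n.
  move: hp; rewrite /probXorQ => hp.
  have e : INR (good_tuples N s r) = INR (good_tuples N s r) / INR (#|QN N s| ^ r)%N * INR (#|QN N s| ^ r)%N.
    by field; apply: Rgt_not_eq.
  rewrite e Rmult_comm; apply: Rmult_le_compat_l; first lra.
  exact: hp.
have fpos : 0 < INR (r.+1)`!.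
  by apply: lt_0_INR; apply/ltP; apply: fact_gt0.
have hI : INR #|Istar_r N s r.+1| * INR (r.+1)`! <= INR (good_tuples N s r).
  by rewrite -mult_INR; apply: le_INR; apply/leP.
have -> : INR (#|QN N s| ^ r)%N / INR (r.+1)`! * pow A r * Rpower (INR N) (INR r / 4)
        * Rpower (INR r) (- (B * sqrt (INR N))) = INR (#|QN N s| ^ r)%N * b / INR (r.+1)`!.
  by rewrite /b; field; apply: Rgt_not_eq.
apply: (Rmult_le_reg_r (INR (r.+1)`!)) => //.
have -> : INR (#|QN N s| ^ r)%N * b / INR (r.+1)`! * INR (r.+1)`! = INR (#|QN N s| ^ r)%N * b.
  by field; apply: Rgt_not_eq.
lra.
Qed.
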